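(* There exist an instance $(C,M)$ of 2-SBCM and a permutation $\pi^0$ of $C$ such that no solution with start permutation $\pi^0$ that has the minimum number of block crossings among all solutions with start permutation $\pi^0$ uses at most one block crossing before the first meeting and at most one block crossing between each pair of consecutive meetings (i.e., every such minimum solution has some $|B_i|\ge 2$).
   Context: A storyline instance is a pair $(C,M)$ where $C=\{1,\dots,k\}$ is a set of characters and $M=[m_1,\dots,m_n]$ is a sequence of meetings with $m_i\subseteq C$; in 2-SBCM every meeting has exactly two characters. A permutation of $C$ lists each character exactly once. For $1\le a\le b<c\le k$, the block crossing $(a,b,c)$ maps $\langle \pi_1,\dots,\pi_k\rangle$ to $\langle \pi_1,\dots,\pi_{a-1},\pi_{b+1},\dots,\pi_c,\pi_a,\dots,\pi_b,\pi_{c+1},\dots,\pi_k\rangle$. A meeting fits (is supported by) a permutation if its characters occupy consecutive positions. A solution is a start permutation $\pi^0$ and sequences $B_1,\dots,B_n$ of block crossings (possibly empty) such that, with $\pi^i$ obtained by applying $B_i$ in order to $\pi^{i-1}$, $\pi^i$ supports $m_i$ for all $i$; its cost is the total number of block crossings. *)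

(* Defs.v *)
From mathcomp Require Import all_boot.
Set Implicit Arguments. Unset Strict Implicit. Unset Printing Implicit Defensive.

(* Characters are 'I_k (i.e. {0,...,k-1}, a relabelling of {1,...,k}).
   Positions in block crossings are 1-indexed, as in the paper. *)

Definition is_char_perm (k : nat) (p : seq 'I_k) : Prop := perm_eq p (enum 'I_k).

Definition block_crossing := (nat * nat * nat)%type.

Definition bc_valid (k : nat) (t : block_crossing) : bool :=
  let: (a, b, c) := t in [&& 1 <= a, a <= b, b < c & c <= k].

(* (a,b,c) maps <p_1..p_k> to <p_1..p_{a-1}, p_{b+1}..p_c, p_a..p_b, p_{c+1}..p_k> *)
Definition apply_bc (T : Type) (p : seq T) (t : block_crossing) : seq T :=
  let: (a, b, c) := t in
  take a.-1 p ++ drop b (take c p) ++ drop a.-1 (take b p) ++ drop c p.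

Definition apply_bcs (T : Type) (p : seq T) (B : seq block_crossing) : seq T :=
  foldl (@apply_bc T) p B.

Definition supports (k : nat) (p : seq 'I_k) (m : {set 'I_k}) : Prop :=
  exists s, s + #|m| <= size p /\ [set x in drop s (take (s + #|m|) p)] = m.

Definition perm_sequence (k : nat) (p0 : seq 'I_k) (Bs : seq (seq block_crossing))
  : seq (seq 'I_k) := scanl (@apply_bcs 'I_k) p0 Bs.

Definition is_solution (k : nat) (M : seq {set 'I_k}) (p0 : seq 'I_k)
    (Bs : seq (seq block_crossing)) : Prop :=
  [/\ is_char_perm p0,
      size Bs = size M,
      all (all (@bc_valid k)) Bs &
      forall i, i < size M -> supports (nth p0 (perm_sequence p0 Bs) i) (nth set0 M i)].

Definition cost (Bs : seq (seq block_crossing)) : nat := sumn (map size Bs).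

Definition is_min_solution_from (k : nat) (M : seq {set 'I_k}) (p0 : seq 'I_k)
    (Bs : seq (seq block_crossing)) : Prop :=
  is_solution M p0 Bs /\
  forall Bs', is_solution M p0 Bs' -> cost Bs <= cost Bs'.

Definition is_2SBCM (k : nat) (M : seq {set 'I_k}) : Prop :=
  all (fun m : {set 'I_k} => #|m| == 2) M.

(* Main.v *)
Require Import Defs.
From mathcomp Require Import all_boot.
From mathcomp Require Import zify.
Set Implicit Arguments. Unset Strict Implicit. Unset Printing Implicit Defensive.

Lemma map_apply_bc (T U : Type) (f : T -> U) (p : seq T) t :
  map f (apply_bc p t) = apply_bc (map f p) t.
Proof. by case: t => [[a b] c]; rewrite /apply_bc !map_cat !map_take !map_drop !map_take. Qed.

Lemma map_apply_bcs (T U : Type) (f : T -> U) (p : seq T) B :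
  map f (apply_bcs p B) = apply_bcs (map f p) B.
Proof. by elim: B p => [|t B IH] p //=; rewrite IH map_apply_bc. Qed.

Lemma map_scanl (T U : Type) (f : T -> U) (p : seq T) Bs :
  map (map f) (scanl (@apply_bcs T) p Bs) = scanl (@apply_bcs U) (map f p) Bs.
Proof. by elim: Bs p => [|B Bs IH] p //=; rewrite IH map_apply_bcs. Qed.

Lemma two_window (T : Type) (x0 : T) p s : s.+1 < size p ->
  drop s (take (s + 2) p) = [:: nth x0 p s; nth x0 p s.+1].
Proof.
elim: p s => [|x p IH] [|s] //=.
  by case: p {IH} => [|y p] //=; case: p.
by move=> H; rewrite ?addSn /= IH.
Qed.

Definition adjn (p : seq nat) (u v : nat) : bool :=
  has (fun s => ((nth 0 p s == u) && (nth 0 p s.+1 == v)) ||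
                ((nth 0 p s == v) && (nth 0 p s.+1 == u))) (iota 0 (size p).-1).

Lemma supports_adj k (p : seq 'I_k) (a b : 'I_k) : a != b ->
  supports p [set a; b] -> adjn (map val p) (val a) (val b).
Proof.
move=> ab [s []]; rewrite cards2 ab /= => hs.
rewrite (two_window a); last lia.
move=> heq.
have ha : a \in [set x in [:: nth a p s; nth a p s.+1]] by rewrite heq !inE eqxx.
have hb : b \in [set x in [:: nth a p s; nth a p s.+1]] by rewrite heq !inE eqxx orbT.
rewrite !inE in ha hb.
apply/hasP; exists s; first by rewrite mem_iota size_map; lia.
rewrite !(nth_map a) ?size_map; try lia.
case/orP: ha => /eqP ha; case/orP: hb => /eqP hb.
- by move: ab; rewrite ha hb eqxx.
- by rewrite -ha -hb !eqxx.
- by rewrite -ha -hb !eqxx orbT.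
- by move: ab; rewrite ha hb eqxx.
Qed.

Lemma adj_supports k (p : seq 'I_k) (a b : 'I_k) : a != b ->
  adjn (map val p) (val a) (val b) -> supports p [set a; b].
Proof.
move=> ab /hasP [s]; rewrite mem_iota size_map => /andP [_ hs].
have hs' : s.+1 < size p by move: hs; rewrite add0n; case: (size p).
rewrite !(nth_map a) ?size_map; try lia.
move=> H; exists s; rewrite cards2 ab /=; split; first lia.
rewrite (two_window a) //.
case/orP: H => /andP [/eqP h1 /eqP h2].
- have e1 : nth a p s = a by apply: val_inj.
  have e2 : nth a p s.+1 = b by apply: val_inj.
  by rewrite e1 e2; apply/setP => x; rewrite !inE.
- have e1 : nth a p s = b by apply: val_inj.
  have e2 : nth a p s.+1 = a by apply: val_inj.
  by rewrite e1 e2; apply/setP => x; rewrite !inE orbC.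
Qed.

Definition all_triples (n : nat) : seq block_crossing :=
  [seq (ab, c) | ab <- [seq (a, b) | a <- iota 0 n.+1, b <- iota 0 n.+1], c <- iota 0 n.+1].

Definition triples := [seq t <- all_triples 7 | bc_valid 7 t].
Arguments triples : simpl never.

Lemma triples_mem t : bc_valid 7 t -> t \in triples.
Proof.
move=> H; rewrite mem_filter H /=.
case: t H => [[a b] c] /= /and4P [h1 h2 h3 h4].
apply: allpairs_f; last by rewrite mem_iota; lia.
by apply: allpairs_f; rewrite mem_iota; lia.
Qed.

Definition step (S : seq (seq nat * nat)) (m : nat * nat) : seq (seq nat * nat) :=
  [seq x <- flatten [seq x :: [seq (apply_bc x.1 t, x.2.+1) | t <- triples] | x <- S]
     | (x.2 <= 2) && adjn x.1 m.1 m.2].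

Definition run S Ms := foldl step S Ms.

Opaque triples.
Lemma run_sound Ms : forall Bs p c S, (p, c) \in S -> size Bs = size Ms ->
  all (fun B => size B <= 1) Bs -> all (all (bc_valid 7)) Bs -> c + cost Bs <= 2 ->
  (forall i, i < size Ms ->
     adjn (nth [::] (scanl (@apply_bcs nat) p Bs) i) (nth (0,0) Ms i).1 (nth (0,0) Ms i).2) ->
  run S Ms != [::].
Proof.
elim: Ms => [|m Ms IH] [|B Bs] p c S //=.
  by move=> hS; case: S hS.
move=> hS [hsz] /andP [hB hBs] /andP [vB vBs] hc hadj.
apply: (IH Bs (apply_bcs p B) (c + size B)) => //.
- rewrite mem_filter /=; apply/andP; split.
    apply/andP; split; first by move: hc; rewrite /cost /=; lia.
    exact: (hadj 0).
  apply/flatten_mapP; exists (p, c) => //.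
  case: B hB vB {hadj hc} => [|t [|t' B]] // _.
    have -> : apply_bcs p [::] = p by [].
    by rewrite addn0 inE eqxx.
  move=> /andP [vt _]; rewrite inE; apply/orP; right.
  have -> : apply_bcs p [:: t] = apply_bc p t by [].
  have -> : c + size [:: t] = c.+1 by rewrite addn1.
  by apply/mapP; exists t => //; exact: triples_mem.
- by move: hc; rewrite /cost /=; lia.
- by move=> i hi; exact: (hadj i.+1).
Qed.

Transparent triples.
Definition Mn : seq (nat * nat) := [:: (1,6); (0,1); (6,3); (3,2); (2,5)].
Definition M7 : seq {set 'I_7} := [seq [set (inord x.1 : 'I_7); inord x.2] | x <- Mn].
Definition Bstar : seq (seq block_crossing) := [:: [:: (4,5,7); (3,4,6)]; [::]; [::]; [::]; [::]].

Lemma Mn_ok : all (fun x => [&& x.1 < 7, x.2 < 7 & x.1 != x.2]) Mn.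
Proof. by []. Qed.

Lemma M7_nth i : i < 5 ->
  exists a b : 'I_7, [/\ nth set0 M7 i = [set a; b], a != b,
     val a = (nth (0,0) Mn i).1 & val b = (nth (0,0) Mn i).2].
Proof.
move=> hi.
have hx : nth (0,0) Mn i \in Mn by rewrite mem_nth.
have := allP Mn_ok _ hx => /and3P [h1 h2 h3].
exists (inord (nth (0,0) Mn i).1), (inord (nth (0,0) Mn i).2).
rewrite (nth_map (0,0)) //; split => //=; try by rewrite inordK.
by apply/negP => /eqP /(congr1 val) /=; rewrite !inordK //; apply/eqP.
Qed.

Lemma val_enum7 : map val (enum 'I_7) = iota 0 7.
Proof. exact: val_enum_ord. Qed.

Lemma seq_nth_val (p0 : seq 'I_7) Bs i : i < size Bs ->
  map val (nth p0 (perm_sequence p0 Bs) i) = nth [::] (scanl (@apply_bcs nat) (map val p0) Bs) i.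
Proof.
move=> hi; rewrite -map_scanl (nth_map p0) /perm_sequence ?size_scanl //.
Qed.

Lemma Bstar_sol : is_solution M7 (enum 'I_7) Bstar.
Proof.
split => //; first exact: perm_refl.
move=> i hi.
have [a [b [-> ab ha hb]]] := M7_nth hi.
apply: adj_supports => //.
rewrite seq_nth_val // val_enum7 ha hb.
by move: i hi {ha hb}; do 5! case=> //.
Qed.

Lemma run_empty : run [:: (iota 0 7, 0)] Mn = [::].
Proof. by vm_compute. Qed.

Theorem proposition1 :
  exists (k : nat) (M : seq {set 'I_k}) (p0 : seq 'I_k),
    is_2SBCM M /\ is_char_perm p0 /\
    forall Bs : seq (seq block_crossing),
      is_min_solution_from M p0 Bs ->
      exists i, i < size Bs /\ 2 <= size (nth [::] Bs i).
Proof.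
exists 7, M7, (enum 'I_7); split.
  apply/allP => m /mapP [x hx ->].
  have := allP Mn_ok _ hx => /and3P [h1 h2 h3].
  have ne : (inord x.1 : 'I_7) != inord x.2.
    by apply/negP => /eqP /(congr1 val) /=; rewrite !inordK //; apply/eqP.
  by rewrite cards2 ne.
split; first exact: perm_refl.
move=> Bs [[_ hsz hval hsup] hmin].
case: (boolP (all (fun B => size B <= 1) Bs)) => hall; last first.
  case/allPn: hall => B hB; rewrite -ltnNge => h2.
  by exists (index B Bs); rewrite index_mem nth_index.
have hc := hmin _ Bstar_sol.
have := @run_sound Mn Bs (iota 0 7) 0 [:: (iota 0 7, 0)].
rewrite run_empty eqxx inE eqxx => /(_ isT hsz hall hval hc) H.
suff /H : forall i, i < size Mn ->
  adjn (nth [::] (scanl (@apply_bcs nat) (iota 0 7) Bs) i) (nth (0,0) Mn i).1 (nth (0,0) Mn i).2 by [].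
move=> i hi.
have [a [b [E ab ha hb]]] := M7_nth hi.
have hs := hsup i hi; rewrite E in hs.
have := supports_adj ab hs.
by rewrite seq_nth_val ?hsz // val_enum7 ha hb.
Qed.
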